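(* Let $L=(l_1,\dots,l_n)$, $n\ge 4$, be a generic length vector satisfying the strict triangle inequality, and let $l_a\ge l_b\ge l_c$ be its three largest entries (for distinct indices $a,b,c$). Suppose $l_b+l_c<|L|/2$. Then for every vertex $(I,J,K)$ of $\Gamma(L)$ there is a path in $\Gamma(L)$ of length at most $6$ from $(I,J,K)$ to its mirror image $(J,I,K)$.
   Context: Let $n\ge 4$ and $L=(l_1,\dots,l_n)$ be positive reals with $l_i<\sum_{j\ne i}l_j$ for every $i$ (strict triangle inequality), and generic: there is no $J\subseteq[n]$ with $\sum_{i\in J}l_i=\sum_{i\notin J}l_i$. Here $[n]=\{1,\dots,n\}$ and $|L|=\sum_{i=1}^n l_i$. A set $I\subseteq[n]$ is short if $\sum_{i\in I}l_i<|L|/2$ and long otherwise. A cyclically ordered partition of $[n]$ into $k$ parts is a sequence $(A_1,\dots,A_k)$ of pairwise disjoint nonempty sets with union $[n]$, considered up to cyclic shifts $(A_1,\dots,A_k)\sim(A_2,\dots,A_k,A_1)$; there is no ordering inside a part. It is admissible if every part is short. The graph $\Gamma(L)$ has as vertices the admissible cyclically ordered partitions of $[n]$ into 3 parts, written $(I,J,K)$, and as edges the admissible cyclically ordered partitions into 4 parts $(A,B,C,D)$; such an edge is incident to each of the partitions $(A\cup B,C,D)$, $(A,B\cup C,D)$, $(A,B,C\cup D)$, $(D\cup A,B,C)$ that is admissible. Equivalently, two vertices are adjacent iff one is obtained from the other by moving a nonempty proper subset of one part into another part. The length of a path is its number of edges. The mirror image of a vertex $(I,J,K)$ is the vertex $(J,I,K)$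 (same parts, reversed cyclic order). (The condition $l_b+l_c<|L|/2$ is equivalent to connectedness of the moduli space of planar configurations of $L$.) *)

(* Defs.v *)
From HB Require Import structures.
From mathcomp Require Import all_boot all_order all_algebra.
Set Implicit Arguments. Unset Strict Implicit. Unset Printing Implicit Defensive.
Import Order.TTheory GRing.Theory Num.Theory.
Local Open Scope ring_scope.

Section Defs.
Variables (R : realFieldType) (n : nat) (l : 'I_n -> R).

Definition totlen : R := \sum_(i < n) l i.

Definition short (S : {set 'I_n}) : bool := \sum_(i in S) l i < totlen / 2%:R.

(* a triple (I,J,K) of sets, read as a cyclically ordered 3-partition *)
Definition triple := ({set 'I_n} * {set 'I_n} * {set 'I_n})%type.

Definition mk3 (I J K : {set 'I_n}) : triple := (I, J, K).

Definition adm3 (t : triple) : bool :=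
  let: (X, Y, Z) := t in
  [&& X != set0, Y != set0, Z != set0,
      [disjoint X & Y], [disjoint Y & Z], [disjoint X & Z],
      X :|: Y :|: Z == setT &
      [&& short X, short Y & short Z]].

Definition adm4 (A B C D : {set 'I_n}) : bool :=
  [&& A != set0, B != set0, C != set0, D != set0,
      [disjoint A & B], [disjoint A & C], [disjoint A & D],
      [disjoint B & C], [disjoint B & D], [disjoint C & D],
      A :|: B :|: C :|: D == setT &
      [&& short A, short B, short C & short D]].

Definition cyc_eq (t s : triple) : Prop :=
  let: (X, Y, Z) := t in s = (X, Y, Z) \/ s = (Y, Z, X) \/ s = (Z, X, Y).

Definition merges (A B C D : {set 'I_n}) : seq triple :=
  [:: (A :|: B, C, D); (A, B :|: C, D); (A, B, C :|: D); (D :|: A, B, C)].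

(* t and s are adjacent in Gamma(L): there is an edge (an admissible
   4-partition) incident to both (i.e. both are admissible merges of it) *)
Definition adj (t s : triple) : Prop :=
  exists A B C D, adm4 A B C D /\
    exists2 m1, m1 \in merges A B C D &
    exists2 m2, m2 \in merges A B C D &
      [/\ adm3 m1, adm3 m2, m1 != m2, cyc_eq m1 t & cyc_eq m2 s].

Fixpoint walk (t : triple) (p : seq triple) : Prop :=
  match p with
  | [::] => True
  | s :: p' => adj t s /\ walk s p'
  end.

End Defs.

(* Main.v *)
Require Import Defs.
From HB Require Import structures.
From mathcomp Require Import all_boot all_order all_algebra.
From mathcomp Require Import ring lra zify.
Import Order.TTheory GRing.Theory Num.Theory.
Local Open Scope ring_scope.
Set Implicit Arguments. Unset Strict Implicit. Unset Printing Implicit Defensive.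

Section Gen.
Variables (T : finType).

Lemma disjP (A B : {set T}) :
  reflect (forall i, i \in A -> i \notin B) [disjoint A & B].
Proof.
rewrite -setI_eq0; apply: (iffP eqP) => [H i iA | H].
- apply/negP => iB; have: i \in A :&: B by rewrite inE iA iB.
  by rewrite H inE.
- apply/setP => i; rewrite !inE; case iA: (i \in A) => //=.
  by rewrite (negbTE (H _ iA)).
Qed.
End Gen.

Section S.
Variables (R : realFieldType) (n : nat) (l : 'I_n -> R).
Hypothesis Hpos : forall i, 0 < l i.
Hypothesis Hgen : forall S : {set 'I_n}, \sum_(i in S) l i != \sum_(i in ~: S) l i.

Definition w (S : {set 'I_n}) := \sum_(i in S) l i.

Lemma wC (S : {set 'I_n}) : w S + w (~: S) = totlen l.
Proof.
rewrite /w /totlen [in RHS](bigID (fun i => i \in S)) /=.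
congr (_ + _); apply: eq_bigl => i; by rewrite ?inE.
Qed.

Lemma wU (A B : {set 'I_n}) : [disjoint A & B] -> w (A :|: B) = w A + w B.
Proof.
move=> H; rewrite /w -bigU //=; apply: eq_bigl => i; by rewrite !inE.
Qed.

Lemma w1 i : w [set i] = l i.
Proof. by rewrite /w big_set1. Qed.

Lemma w_ge0 (S : {set 'I_n}) : 0 <= w S.
Proof. by apply: sumr_ge0 => i _; apply: ltW. Qed.

Lemma wsub (A B : {set 'I_n}) : A \subset B -> w A <= w B.
Proof.
move=> H; rewrite /w [X in _ <= X](big_setID A) /=.
rewrite (setIidPr H) lerDl; apply: sumr_ge0 => i _; exact: ltW.
Qed.

Lemma shortE (S : {set 'I_n}) : short l S = (w S < totlen l / 2%:R).
Proof. by []. Qed.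

Lemma short_sub (A B : {set 'I_n}) : A \subset B -> short l B -> short l A.
Proof. rewrite !shortE => H1 H2; exact: le_lt_trans (wsub H1) H2. Qed.

Lemma long_sup (A B : {set 'I_n}) : A \subset B -> ~~ short l A -> ~~ short l B.
Proof. move=> H; apply: contra; exact: short_sub. Qed.

Lemma wCE (S : {set 'I_n}) : w (~: S) = totlen l - w S.
Proof. rewrite -(wC S); ring. Qed.

Lemma short_compl (S : {set 'I_n}) : short l S -> ~~ short l (~: S).
Proof. rewrite !shortE wCE -!leNgt => H.
have := H; set t := totlen l; set x := w S => H'.
have -> : t / 2%:R = t - t / 2%:R by field.
lra.
Qed.

Lemma long_compl (S : {set 'I_n}) : ~~ short l S -> short l (~: S).
Proof.
rewrite !shortE wCE -!leNgt => H.
have Hn := Hgen S; rewrite -/(w S) -/(w (~: S)) wCE in Hn.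
set t := totlen l in H Hn *; set x := w S in H Hn *.
have E : t / 2%:R = t - t / 2%:R by field.
have : x != t / 2%:R.
  apply: contra Hn => /eqP ->; apply/eqP; rewrite {1}E //.
rewrite neq_lt => /orP [h|h]; lra.
Qed.

Hypothesis Htri : forall i, l i < \sum_(j < n | j != i) l j.

Lemma short1 i : short l [set i].
Proof.
rewrite shortE w1 /totlen (bigD1 i) //=.
have := Htri i; set s := \sum_(j < n | j != i) l j => h; lra.
Qed.

Lemma wU1 (S : {set 'I_n}) i : i \notin S -> w (S :|: [set i]) = w S + l i.
Proof.
move=> H; rewrite wU ?w1 //; apply/disjP => j jS; rewrite inE.
by apply/eqP => E; move: H; rewrite -E jS.
Qed.

Definition part3 (X Y Z : {set 'I_n}) :=
  forall i, ((i \in X) + (i \in Y) + (i \in Z) = 1)%N.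

Lemma adm3P (X Y Z : {set 'I_n}) : adm3 l (X, Y, Z) <->
  [/\ X != set0, Y != set0, Z != set0, part3 X Y Z &
      [/\ short l X, short l Y & short l Z]].
Proof.
split.
- move=> /andP [h1 /andP [h2 /andP [h3 /andP [/disjP d1 /andP [/disjP d2 /andP [/disjP d3 /andP [/eqP U /and3P [s1 s2 s3]]]]]]]].
  split => // i.
  have : i \in X :|: Y :|: Z by rewrite U inE.
  rewrite !inE.
  case iX: (i \in X); case iY: (i \in Y); case iZ: (i \in Z) => //=.
  + by move: (d1 i iX); rewrite iY.
  + by move: (d1 i iX); rewrite iY.
  + by move: (d3 i iX); rewrite iZ.
  + by move: (d2 i iY); rewrite iZ.
- case=> h1 h2 h3 P [s1 s2 s3]; rewrite /adm3 h1 h2 h3 /=.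
  apply/andP; split; last apply/andP; last split; last apply/andP; last split; last apply/andP; last split.
  + apply/disjP => i; move: (P i).
    by case: (i \in X); case: (i \in Y); case: (i \in Z).
  + apply/disjP => i; move: (P i).
    by case: (i \in X); case: (i \in Y); case: (i \in Z).
  + apply/disjP => i; move: (P i).
    by case: (i \in X); case: (i \in Y); case: (i \in Z).
  + apply/eqP/setP => i; move: (P i); rewrite !inE.
    by case: (i \in X); case: (i \in Y); case: (i \in Z).
  + by apply/and3P.
Qed.


Lemma adm3_rot (X Y Z : {set 'I_n}) : adm3 l (X, Y, Z) -> adm3 l (Y, Z, X).
Proof.
case/adm3P => h1 h2 h3 P [s1 s2 s3]; apply/adm3P; split => // i.
by move: (P i); case: (i \in X); case: (i \in Y); case: (i \in Z).
Qed.

Lemma adm4I (A B C D : {set 'I_n}) :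
  A != set0 -> B != set0 -> C != set0 -> D != set0 ->
  (forall i, ((i \in A) + (i \in B) + (i \in C) + (i \in D) = 1)%N) ->
  short l A -> short l B -> short l C -> short l D -> adm4 l A B C D.
Proof.
move=> h1 h2 h3 h4 P s1 s2 s3 s4; rewrite /adm4 h1 h2 h3 h4 s1 s2 s3 s4 /=.
have dj : forall i, ((i \in A) + (i \in B) + (i \in C) + (i \in D) = 1)%N -> True by [].
rewrite !andbT.
apply/andP; split; first by apply/disjP => i; move: (P i);
  case: (i \in A); case: (i \in B); case: (i \in C); case: (i \in D).
apply/andP; split; first by apply/disjP => i; move: (P i);
  case: (i \in A); case: (i \in B); case: (i \in C); case: (i \in D).
apply/andP; split; first by apply/disjP => i; move: (P i);
  case: (i \in A); case: (i \in B); case: (i \in C); case: (i \in D).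
apply/andP; split; first by apply/disjP => i; move: (P i);
  case: (i \in A); case: (i \in B); case: (i \in C); case: (i \in D).
apply/andP; split; first by apply/disjP => i; move: (P i);
  case: (i \in A); case: (i \in B); case: (i \in C); case: (i \in D).
apply/andP; split; first by apply/disjP => i; move: (P i);
  case: (i \in A); case: (i \in B); case: (i \in C); case: (i \in D).
apply/eqP/setP => i; move: (P i); rewrite !inE.
by case: (i \in A); case: (i \in B); case: (i \in C); case: (i \in D).
Qed.

Lemma neq0_setU (A B : {set 'I_n}) : A != set0 -> A :|: B != set0.
Proof. by rewrite setU_eq0 => /negbTE ->. Qed.

Lemma neq0_setU2 (A B : {set 'I_n}) : B != set0 -> A :|: B != set0.
Proof. by rewrite setU_eq0 => /negbTE ->; rewrite andbF. Qed.

Lemma move_next (P Q Z S : {set 'I_n}) :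
  adm3 l (P, Q, Z) -> S \subset P -> S != set0 -> P :\: S != set0 ->
  short l (Q :|: S) ->
  adm3 l (P :\: S, Q :|: S, Z) /\ adj l (P, Q, Z) (P :\: S, Q :|: S, Z).
Proof.
move=> H sP s0 d0 sh; move/adm3P: (H) => [h1 h2 h3 Pt [s1 s2 s3]].
have mS : forall i, (i \in S) ==> (i \in P) by move=> i; apply/implyP; move/subsetP: sP; apply.
have HT : adm3 l (P :\: S, Q :|: S, Z).
  apply/adm3P; split => //; first exact: neq0_setU.
  - move=> i; move: (Pt i) (mS i); rewrite !inE.
    by case: (i \in P); case: (i \in Q); case: (i \in Z); case: (i \in S).
  - split => //; apply: short_sub s1; exact: subsetDl.
split => //.
exists (P :\: S), S, Q, Z; split.
  apply: adm4I => //.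
  - move=> i; move: (Pt i) (mS i); rewrite !inE.
    by case: (i \in P); case: (i \in Q); case: (i \in Z); case: (i \in S).
  - apply: short_sub s1; exact: subsetDl.
  - exact: short_sub s1.
have E1 : P :\: S :|: S = P.
  apply/setP => i; move: (mS i); rewrite !inE.
  by case: (i \in P); case: (i \in S).
exists (P :\: S :|: S, Q, Z); first by rewrite inE eqxx.
exists (P :\: S, S :|: Q, Z); first by rewrite !inE eqxx !orbT.
split.
- by rewrite E1.
- by rewrite setUC.
- rewrite E1; apply/negP => /eqP [E _].
  case/set0Pn: s0 => x xS.
  by move: (mS x); rewrite xS /= {1}E !inE xS.
- by rewrite E1 /=; left.
- by rewrite /= setUC; left.
Qed.

Lemma move_prev (P Q Z S : {set 'I_n}) :
  adm3 l (P, Q, Z) -> S \subset P -> S != set0 -> P :\: S != set0 ->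
  short l (Z :|: S) ->
  adm3 l (P :\: S, Q, Z :|: S) /\ adj l (P, Q, Z) (P :\: S, Q, Z :|: S).
Proof.
move=> H sP s0 d0 sh; move/adm3P: (H) => [h1 h2 h3 Pt [s1 s2 s3]].
have mS : forall i, (i \in S) ==> (i \in P) by move=> i; apply/implyP; move/subsetP: sP; apply.
have HT : adm3 l (P :\: S, Q, Z :|: S).
  apply/adm3P; split => //; first exact: neq0_setU.
  - move=> i; move: (Pt i) (mS i); rewrite !inE.
    by case: (i \in P); case: (i \in Q); case: (i \in Z); case: (i \in S).
  - split => //; apply: short_sub s1; exact: subsetDl.
split => //.
exists S, (P :\: S), Q, Z; split.
  apply: adm4I => //.
  - move=> i; move: (Pt i) (mS i); rewrite !inE.
    by case: (i \in P); case: (i \in Q); case: (i \in Z); case: (i \in S).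
  - exact: short_sub s1.
  - apply: short_sub s1; exact: subsetDl.
have E1 : S :|: P :\: S = P.
  apply/setP => i; move: (mS i); rewrite !inE.
  by case: (i \in P); case: (i \in S).
exists (S :|: P :\: S, Q, Z); first by rewrite inE eqxx.
exists (Z :|: S, P :\: S, Q); first by rewrite !inE eqxx !orbT.
split.
- by rewrite E1.
- by apply: adm3_rot; apply: adm3_rot.
- rewrite E1; apply/negP => /eqP [_ _ E].
  case/set0Pn: h2 => x xQ.
  by move: (Pt x); rewrite E xQ; case: (x \in P).
- by rewrite E1 /=; left.
- by rewrite /=; right; left.
Qed.


Lemma cyc_refl (t : triple n) : cyc_eq t t.
Proof. by case: t => [[X Y] Z]; rewrite /cyc_eq; left. Qed.

Lemma cyc_sym (t s : triple n) : cyc_eq t s -> cyc_eq s t.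
Proof.
case: t => [[X Y] Z]; rewrite /cyc_eq => [[->|[->|->]]] /=; [left | right; right | right; left]; done.
Qed.

Lemma cyc_trans (t s u : triple n) : cyc_eq t s -> cyc_eq s u -> cyc_eq t u.
Proof.
case: t => [[X Y] Z]; rewrite /cyc_eq => [[->|[->|->]]] /= [->|[->|->]]; tauto.
Qed.

Lemma adj_cyc (t s t' s' : triple n) :
  adj l t s -> cyc_eq t t' -> cyc_eq s s' -> adj l t' s'.
Proof.
move=> [A [B [C [D [H [m1 i1 [m2 i2 [a1 a2 ne c1 c2]]]]]]]] ct cs.
exists A, B, C, D; split => //; exists m1 => //; exists m2 => //; split => //.
- exact: cyc_trans c1 ct.
- exact: cyc_trans c2 cs.
Qed.

Lemma walk_cyc (x y : triple n) p : cyc_eq x y -> walk l x p -> walk l y p.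
Proof.
case: p => [|s p] cxy /=; first by []. 
move=> [h w]; split => //.
exact: adj_cyc h cxy (cyc_refl s).
Qed.

Lemma walk_cat (x : triple n) p q :
  walk l x (p ++ q) <-> walk l x p /\ walk l (last x p) q.
Proof.
elim: p x => [|s p IH] x /=; first by split => // [[]].
rewrite IH; tauto.
Qed.

Definition RC k (t s : triple n) :=
  exists p : seq (triple n), (size p <= k)%N /\ walk l t p /\ cyc_eq (last t p) s.

Lemma RC_refl k t s : cyc_eq t s -> RC k t s.
Proof. by exists [::]. Qed.

Lemma RC_adj t s : adj l t s -> RC 1 t s.
Proof. by move=> h; exists [:: s]; split => //=; split => //; apply: cyc_refl. Qed.

Lemma RC_le k k' t s : (k <= k')%N -> RC k t s -> RC k' t s.
Proof. move=> le [p [h1 h2]]; exists p; split => //; exact: leq_trans le. Qed.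

Lemma RC_trans k1 k2 t s u : RC k1 t s -> RC k2 s u -> RC (k1 + k2) t u.
Proof.
move=> [p [h1 [w1 c1]]] [q [h2 [w2 c2]]].
exists (p ++ q); split; first by rewrite size_cat leq_add.
split; first by apply/walk_cat; split => //; apply: walk_cyc w2; exact: cyc_sym.
rewrite last_cat; case: q w2 c2 {h2} => [|y q] /= _ c2.
- exact: cyc_trans c1 c2.
- by [].
Qed.

Lemma RC_start k t t' s : cyc_eq t t' -> RC k t s -> RC k t' s.
Proof.
move=> ct [p [h1 [w1 c1]]]; exists p; split => //; split; first exact: walk_cyc w1.
case: p w1 c1 {h1} => [|y p] //= _ c1.
apply: cyc_trans c1; exact: cyc_sym.
Qed.


Lemma set1_n0 (x : 'I_n) : [set x] != set0.
Proof. by apply/set0Pn; exists x; rewrite inE. Qed.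

Lemma adm3_rot2 (X Y Z : {set 'I_n}) : adm3 l (X, Y, Z) -> adm3 l (Z, X, Y).
Proof. by move=> h; do 2! apply: adm3_rot. Qed.

Lemma T4 (X A B : {set 'I_n}) e f :
  adm3 l (X, A, B) -> e \in A -> f \in B ->
  short l ([set e] :|: [set f]) ->
  ~~ short l (X :|: [set e]) -> ~~ short l (X :|: [set f]) ->
  RC 4 (X, A, B) (X, B, A).
Proof.
move=> H eA fB sEF lXe lXf.
move/adm3P: (H) => [h1 h2 h3 Pt [sX sA sB]].
have eX : (e \in X) = false by move: (Pt e); rewrite eA; case: (e \in X).
have eB : (e \in B) = false by move: (Pt e); rewrite eA; case: (e \in X); case: (e \in B).
have fX : (f \in X) = false by move: (Pt f); rewrite fB; case: (f \in X); case: (f \in A).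
have fA : (f \in A) = false by move: (Pt f); rewrite fB; case: (f \in X); case: (f \in A).
have efF : (e == f) = false by apply/negP => /eqP E; move: eB; rewrite E fB.
have feF : (f == e) = false by rewrite eq_sym.
have mf := (eA, fB, eX, eB, fX, fA, efF, feF).
pose C1 := ~: (X :|: [set e]).
pose Ef := [set e] :|: [set f].
pose C2 := C1 :\: [set f].
pose C3 := C2 :|: [set e].
have stA : adm3 l (X, [set e], C1) /\ RC 1 (X, A, B) (X, [set e], C1).
  case: (eqVneq A [set e]) => [EA|nA].
  - have EB : B = C1.
      apply/setP => i; unfold Ef, C1, C2, C3; rewrite !inE; move: (Pt i); rewrite EA !inE.
      case: (eqVneq i e) => [->|_]; rewrite ?mf ?eqxx /=;
      by case: (i \in X); case: (i \in B).
    rewrite -EB -EA; split => //; apply: RC_refl; exact: cyc_refl.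
  - have S0 : A :\: [set e] != set0.
      apply: contra nA => /eqP E0; apply/eqP/setP => i; rewrite inE.
      apply/idP/eqP => [iA|->//]; apply/eqP; apply: contraT => ne.
      have : i \in A :\: [set e] by rewrite !inE ne iA.
      by rewrite E0 inE.
    have sS : short l (B :|: (A :\: [set e])).
      have -> : B :|: (A :\: [set e]) = C1.
        apply/setP => i; unfold Ef, C1, C2, C3; rewrite !inE; move: (Pt i).
        case: (eqVneq i e) => [->|_]; rewrite ?mf ?eqxx /=;
        by case: (i \in X); case: (i \in A); case: (i \in B).
      exact: long_compl.
    have E1 : A :\: (A :\: [set e]) = [set e].
      apply/setP => i; unfold Ef, C1, C2, C3; rewrite !inE; case: (eqVneq i e) => [->|_] /=; rewrite ?eA //; by case: (i \in A).
    have N1 : A :\: (A :\: [set e]) != set0 by rewrite E1 set1_n0.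
    have [ad aj] := move_next (adm3_rot H) (subsetDl A [set e]) S0 N1 sS.
    have E2 : B :|: (A :\: [set e]) = C1.
      apply/setP => i; unfold Ef, C1, C2, C3; rewrite !inE; move: (Pt i).
      case: (eqVneq i e) => [->|_]; rewrite ?mf ?eqxx /=;
      by case: (i \in X); case: (i \in A); case: (i \in B).
    rewrite E1 E2 in ad aj.
    split; first exact: adm3_rot2.
    apply: RC_adj; apply: adj_cyc aj _ _.
    + by rewrite /cyc_eq; right; right.
    + by rewrite /cyc_eq; right; right.
case: stA => ad1 stA.
have stB : adm3 l (X, Ef, C2) /\ RC 1 (X, [set e], C1) (X, Ef, C2).
  have N2 : C2 != set0.
    apply/negP => /eqP E0.
    have sub : ~: Ef \subset X.
      apply/subsetP => i; unfold Ef, C1, C2, C3; rewrite !inE => H'; move/setP/(_ i): E0; rewrite !inE.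
      case: (i \in X) => //; move: H'; by case: (i == e); case: (i == f).
    by have := long_sup sub (short_compl sEF); rewrite sX.
  have sf : [set f] \subset C1 by unfold Ef, C1, C2, C3; rewrite sub1set !inE fX feF.
  have [ad aj] := move_prev (adm3_rot2 ad1) sf (set1_n0 f) N2 sEF.
  split; first exact: adm3_rot.
  apply: RC_adj; apply: adj_cyc aj _ _.
  + by rewrite /cyc_eq; right; left.
  + by rewrite /cyc_eq; right; left.
case: stB => ad2 stB.
have stC : adm3 l (X, [set f], C3) /\ RC 1 (X, Ef, C2) (X, [set f], C3).
  have E3 : Ef :\: [set e] = [set f].
    apply/setP => i; unfold Ef, C1, C2, C3; rewrite !inE; case: (eqVneq i e) => [->|_]; rewrite ?mf //=.
  have N3 : Ef :\: [set e] != set0 by rewrite E3 set1_n0.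
  have se : [set e] \subset Ef by unfold Ef, C1, C2, C3; rewrite sub1set !inE eqxx.
  have sS : short l (C2 :|: [set e]).
    have -> : C2 :|: [set e] = ~: (X :|: [set f]).
      apply/setP => i; unfold Ef, C1, C2, C3; rewrite !inE.
      case: (eqVneq i e) => [->|_]; rewrite ?mf //=.
      by case: (i == f); case: (i \in X).
    exact: long_compl.
  have [ad aj] := move_next (adm3_rot ad2) se (set1_n0 e) N3 sS.
  rewrite E3 in ad aj.
  split; first exact: adm3_rot2.
  apply: RC_adj; apply: adj_cyc aj _ _.
  + by rewrite /cyc_eq; right; right.
  + by rewrite /cyc_eq; right; right.
case: stC => ad3 stC.
have stD : RC 1 (X, [set f], C3) (X, B, A).
  case: (eqVneq B [set f]) => [EB|nB].
  - have EA : C3 = A.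
      apply/setP => i; unfold Ef, C1, C2, C3; rewrite !inE; move: (Pt i); rewrite EB !inE.
      case: (eqVneq i e) => [->|_]; rewrite ?mf ?eqxx //=.
      case: (eqVneq i f) => [->|_]; rewrite ?mf ?eqxx //=.
      by case: (i \in X); case: (i \in A).
    rewrite EA EB; apply: RC_refl; exact: cyc_refl.
  - pose S := B :\: [set f].
    have S0 : S != set0.
      apply: contra nB => /eqP E0; apply/eqP/setP => i; rewrite inE.
      apply/idP/eqP => [iB|->//]; apply/eqP; apply: contraT => ne.
      have : i \in B :\: [set f] by rewrite !inE ne iB.
      by rewrite -/S E0 inE.
    have sS : S \subset C3.
      apply/subsetP => i; unfold Ef, C1, C2, C3; rewrite !inE => /andP [ne iB].
      move: (Pt i); rewrite iB.
      case: (eqVneq i e) => [E|_]; first by move: iB; rewrite E mf.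
      rewrite (negbTE ne) /=; by case: (i \in X); case: (i \in A).
    have N4 : C3 :\: S != set0.
      apply/set0Pn; exists e; unfold Ef, C1, C2, C3, S; by rewrite !inE ?mf ?eqxx.
    have E5 : [set f] :|: S = B.
      apply/setP => i; unfold Ef, C1, C2, C3; rewrite !inE; case: (eqVneq i f) => [->|_] //=; by rewrite fB.
    have sS' : short l ([set f] :|: S) by rewrite E5.
    have [ad aj] := move_prev (adm3_rot2 ad3) sS S0 N4 sS'.
    have E4 : C3 :\: S = A.
      apply/setP => i; unfold Ef, C1, C2, C3; rewrite !inE; move: (Pt i).
      case: (eqVneq i e) => [->|_]; rewrite ?mf ?eqxx //=.
      case: (eqVneq i f) => [->|_]; rewrite ?mf ?eqxx //=.
      by case: (i \in X); case: (i \in A); case: (i \in B).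
    rewrite E4 E5 in aj.
    apply: RC_adj; apply: adj_cyc aj _ _.
    + by rewrite /cyc_eq; right; left.
    + by rewrite /cyc_eq; right; left.
exact: (RC_trans (RC_trans (RC_trans stA stB) stC) stD).
Qed.


Lemma adm3_mirror (X Y Z : {set 'I_n}) : adm3 l (X, Y, Z) -> adm3 l (X, Z, Y).
Proof.
case/adm3P => h1 h2 h3 P [s1 s2 s3]; apply/adm3P; split => // i.
by move: (P i); case: (i \in X); case: (i \in Y); case: (i \in Z).
Qed.

Lemma heavy_mono (Y : {set 'I_n}) e m :
  e \notin Y -> m \notin Y -> l e <= l m ->
  ~~ short l (Y :|: [set e]) -> ~~ short l (Y :|: [set m]).
Proof.
move=> eY mY le; rewrite !shortE -!leNgt (wU1 eY) (wU1 mY) => h; lra.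
Qed.

Lemma case2 (X P Q : {set 'I_n}) a m :
  (forall e f, e != a -> f != a -> e != f -> short l ([set e] :|: [set f])) ->
  adm3 l (X, P, Q) -> a \in X -> m \in Q ->
  (forall i, i \in P -> l i <= l m) ->
  (forall e, e \in P -> short l (X :|: [set e])) ->
  RC 6 (X, P, Q) (X, Q, P) /\ RC 6 (X, Q, P) (X, P, Q).
Proof.
move=> Hpair H aX mQ mmax light.
move/adm3P: (H) => [h1 h2 h3 Pt [sX sP sQ]].
have mX : (m \in X) = false by move: (Pt m); rewrite mQ; case: (m \in X); case: (m \in P).
have mP : (m \in P) = false by move: (Pt m); rewrite mQ; case: (m \in X); case: (m \in P).
have ma : m != a by apply/negP => /eqP E; move: mX; rewrite E aX.
case/set0Pn: h2 => p pP.
have pPne : [set p] != P.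
  apply/negP => /eqP Ep.
  have : ~~ short l (X :|: [set p]).
    have -> : X :|: [set p] = ~: Q.
      apply/setP => i; rewrite Ep !inE; move: (Pt i); rewrite -Ep !inE.
      by case: (i \in X); case: (i == p); case: (i \in Q).
    exact: short_compl.
  by rewrite light.
pose C := fun S : {set 'I_n} => [&& S \subset P, S != set0, S != P & short l (X :|: S)].
have Cp : C [set p] by rewrite /C sub1set pP set1_n0 pPne light.
case: (@arg_maxnP _ [set p] C (fun S => #|S|) Cp) => S CS Smax.
case/and4P: CS => sSP S0 SP sXS.
have [e eP eS] : exists2 e, e \in P & e \notin S.
  have : P :\: S != set0.
    apply: contra SP => /eqP E0; rewrite eqEsubset sSP /=; apply/subsetP => i iP.
    apply: contraT => iS; have : i \in P :\: S by rewrite inE iS iP.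
    by rewrite E0 inE.
  case/set0Pn => e; rewrite inE => /andP [eS eP]; by exists e.
have eX : (e \in X) = false by move: (Pt e); rewrite eP; case: (e \in X).
have eQ : (e \in Q) = false by move: (Pt e); rewrite eP; case: (e \in X); case: (e \in Q).
have heavy_e : ~~ short l ((X :|: S) :|: [set e]).
  have -> : (X :|: S) :|: [set e] = X :|: (e |: S) by rewrite -setUA [S :|: _]setUC.
  case: (eqVneq (e |: S) P) => [EP|NP].
  - have -> : X :|: (e |: S) = ~: Q.
      apply/setP => i; rewrite EP !inE; move: (Pt i).
      by case: (i \in X); case: (i \in P); case: (i \in Q).
    exact: short_compl.
  - apply/negP => sh.
    have CS' : C (e |: S).
      rewrite /C sh NP andbT; apply/andP; split.
      + by rewrite subUset sub1set eP sSP.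
      + by rewrite andbT; apply/set0Pn; exists e; rewrite !inE eqxx.
    by have := Smax _ CS'; rewrite cardsU1 eS /= ltnn.
have eXS : e \notin X :|: S by rewrite !inE eX (negbTE eS).
have mXS : m \notin X :|: S.
  rewrite !inE mX /=; apply/negP => mS; move/subsetP: sSP => /(_ m mS).
  by rewrite mP.
have heavy_m := heavy_mono eXS mXS (mmax e eP) heavy_e.
have ea : e != a by apply/negP => /eqP E; move: eX; rewrite E aX.
have em : e != m by apply/negP => /eqP E; move: eP; rewrite E mP.
have me : m != e by rewrite eq_sym.
have PSn : P :\: S != set0 by apply/set0Pn; exists e; rewrite inE eS eP.
have SX : forall i, i \in S -> (i \in X) = false.
  move=> i iS; move/subsetP: sSP => /(_ i iS) iP.
  by move: (Pt i); rewrite iP; case: (i \in X).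
have EX : (X :|: S) :\: S = X.
  apply/setP => i; rewrite !inE; case iS: (i \in S) => /=; last by rewrite orbF.
  by rewrite SX.
have EP : P :\: S :|: S = P.
  apply/setP => i; rewrite !inE; case iS: (i \in S) => /=; last by rewrite orbF.
  by move/subsetP: sSP => /(_ i iS) ->.
have XSn : (X :|: S) :\: S != set0 by rewrite EX.
have sPS : short l (P :\: S :|: S) by rewrite EP.
have [ad' aj'] := move_prev (adm3_rot H) sSP S0 PSn sXS.
have ad1 : adm3 l (X :|: S, P :\: S, Q) := adm3_rot2 ad'.
have ad2 : adm3 l (X :|: S, Q, P :\: S) := adm3_mirror ad1.
have eP' : e \in P :\: S by rewrite inE eS eP.
split.
- have st1 : RC 1 (X, P, Q) (X :|: S, P :\: S, Q).
    apply: RC_adj; apply: adj_cyc aj' _ _.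
    + by rewrite /cyc_eq; right; right.
    + by rewrite /cyc_eq; right; right.
  have st2 := T4 ad1 eP' mQ (Hpair _ _ ea ma em) heavy_e heavy_m.
  have st3 : RC 1 (X :|: S, Q, P :\: S) (X, Q, P).
    have [_ aj] := move_prev ad2 (subsetUr X S) S0 XSn sPS.
    rewrite EX EP in aj; exact: RC_adj.
  exact: RC_trans (RC_trans st1 st2) st3.
- have st1 : RC 1 (X, Q, P) (X :|: S, Q, P :\: S).
    have [_ aj] := move_next (adm3_rot2 (adm3_mirror H)) sSP S0 PSn sXS.
    apply: RC_adj; apply: adj_cyc aj _ _.
    + by rewrite /cyc_eq; right; left.
    + by rewrite /cyc_eq; right; left.
  have st2 := T4 ad2 mQ eP' (Hpair _ _ ma ea me) heavy_m heavy_e.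
  have st3 : RC 1 (X :|: S, P :\: S, Q) (X, P, Q).
    have [_ aj] := move_next ad1 (subsetUr X S) S0 XSn sPS.
    rewrite EX EP in aj; exact: RC_adj.
  exact: RC_trans (RC_trans st1 st2) st3.
Qed.


Lemma RC_end k t s s' : RC k t s -> cyc_eq s s' -> RC k t s'.
Proof. move=> [p [h1 [h2 h3]]] c; exists p; split => //; split => //; exact: cyc_trans h3 c. Qed.

Lemma main_a (X A B : {set 'I_n}) a :
  (forall e f, e != a -> f != a -> e != f -> short l ([set e] :|: [set f])) ->
  adm3 l (X, A, B) -> a \in X -> RC 6 (X, A, B) (X, B, A).
Proof.
move=> Hpair H aX.
move/adm3P: (H) => [h1 h2 h3 Pt [sX sA sB]].
case/set0Pn: h2 => i0 i0A.
have i0U : i0 \in A :|: B by rewrite inE i0A.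
case: (@arg_maxP _ _ _ i0 (fun i => i \in A :|: B) l i0U) => m mU mmax.
have notX : forall i, i \in A :|: B -> (i \in X) = false.
  move=> i; rewrite inE; move: (Pt i).
  by case: (i \in X); case: (i \in A); case: (i \in B).
have mX := notX m mU.
have neq_a : forall i, (i \in X) = false -> i != a.
  by move=> i iX; apply/negP => /eqP E; move: iX; rewrite E aX.
case mB: (m \in B).
- have mA : (m \in A) = false.
    by move: (Pt m); rewrite mB mX; case: (m \in A).
  case: (boolP [exists e in A, ~~ short l (X :|: [set e])]) => [/exists_inP [e eA he]|Hn].
  + have eX : (e \in X) = false by apply: notX; rewrite inE eA.
    have em : e != m by apply/negP => /eqP E; move: eA; rewrite E mA.
    have hm : ~~ short l (X :|: [set m]).
      apply: heavy_mono he; rewrite ?eX ?mX //.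
      by apply: mmax; rewrite inE eA.
    apply: RC_le (_ : (4 <= 6)%N) _ => //.
    exact: T4 H eA mB (Hpair _ _ (neq_a _ eX) (neq_a _ mX) em) he hm.
  + have light : forall e, e \in A -> short l (X :|: [set e]).
      move=> e eA; apply: contraNT Hn => h; apply/exists_inP; by exists e.
    have mm : forall i, i \in A -> l i <= l m by move=> i iA; apply: mmax; rewrite inE iA.
    exact: (case2 Hpair H aX mB mm light).1.
- have mA : m \in A by move: mU; rewrite inE mB orbF.
  case: (boolP [exists f in B, ~~ short l (X :|: [set f])]) => [/exists_inP [f fB hf]|Hn].
  + have fX : (f \in X) = false by apply: notX; rewrite inE fB orbT.
    have mf : m != f by apply/negP => /eqP E; move: fB; rewrite -E mB.
    have hm : ~~ short l (X :|: [set m]).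
      apply: heavy_mono hf; rewrite ?fX ?mX //.
      by apply: mmax; rewrite inE fB orbT.
    apply: RC_le (_ : (4 <= 6)%N) _ => //.
    exact: T4 H mA fB (Hpair _ _ (neq_a _ mX) (neq_a _ fX) mf) hm hf.
  + have light : forall e, e \in B -> short l (X :|: [set e]).
      move=> e eB; apply: contraNT Hn => h; apply/exists_inP; by exists e.
    have mm : forall i, i \in B -> l i <= l m by move=> i iB; apply: mmax; rewrite inE iB orbT.
    exact: (case2 Hpair (adm3_mirror H) aX mA mm light).2.
Qed.

End S.


Unset Implicit Arguments.
Set Strict Implicit.

Theorem mainTheorem6 (R : realFieldType) (n : nat) (l : 'I_n -> R)
    (a b c : 'I_n) :
  (4 <= n)%N ->
  (forall i, 0 < l i) ->
  (forall i, l i < \sum_(j < n | j != i) l j) ->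
  (forall S : {set 'I_n}, \sum_(i in S) l i != \sum_(i in ~: S) l i) ->
  a != b -> a != c -> b != c ->
  l b <= l a -> l c <= l b ->
  (forall i, i != a -> i != b -> i != c -> l i <= l c) ->
  l b + l c < totlen l / 2%:R ->
  forall I J K : {set 'I_n}, adm3 l (mk3 I J K) ->
  exists p : seq (triple n),
    (size p <= 6)%N /\ walk l (mk3 I J K) p /\
    cyc_eq (last (mk3 I J K) p) (mk3 J I K).
Proof.
move=> n4 Hpos Htri Hgen ab ac bc lba lcb Hrest Hbc I J K H.
have leb : forall x, x != a -> l x <= l b.
  move=> x xa; case: (eqVneq x b) => [->|xb]; first by [].
  case: (eqVneq x c) => [->|xc]; first by [].
  exact: le_trans (Hrest x xa xb xc) lcb.
have lec : forall x, x != a -> x != b -> l x <= l c.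
  move=> x xa xb; case: (eqVneq x c) => [->|xc]; first by [].
  exact: Hrest x xa xb xc.
have Hpair : forall e f, e != a -> f != a -> e != f -> short l ([set e] :|: [set f]).
  move=> e f ea fa ef.
  rewrite shortE wU; last first.
    apply/disjP => i; rewrite !inE => /eqP ->; exact: ef.
  rewrite !w1.
  apply: le_lt_trans Hbc.
  case: (eqVneq e b) => [Eb|eb].
  - subst e; rewrite lerD2l; apply: (lec f fa); by rewrite eq_sym.
  - case: (eqVneq f b) => [Fb|fb].
    + subst f; by rewrite addrC lerD2l; apply: lec.
    + have h1 := lec e ea eb; have h2 := lec f fa fb; lra.
rewrite /mk3 in H *.
move/adm3P: (H) => [h1 h2 h3 Pt _].
move: (Pt a); case aI: (a \in I); case aJ: (a \in J); case aK: (a \in K) => //= _.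
- have := main_a Hpos Hgen Hpair H aI.
  move/RC_end.
  by move=> /(_ (J, I, K) ltac:(by rewrite /cyc_eq; right; right)).
- have := main_a Hpos Hgen Hpair (adm3_rot H) aJ.
  move/(RC_start (_ : cyc_eq (J, K, I) (I, J, K))).
  by move=> /(_ ltac:(by rewrite /cyc_eq; right; right)).
- have := main_a Hpos Hgen Hpair (adm3_rot2 H) aK.
  move/(RC_start (_ : cyc_eq (K, I, J) (I, J, K))).
  move=> /(_ ltac:(by rewrite /cyc_eq; right; left)) /RC_end.
  by move=> /(_ (J, I, K) ltac:(by rewrite /cyc_eq; right; left)).
Qed.
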